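(* For every prime power $q$, the chromatic number $\chi$ of the Kneser graph of flags of type $\{2,3\}$ of $\mathrm{PG}(6,q)$ satisfies $\chi\le q^4+q^3+q^2+1$.
   Context: Dimensions are projective (planes 2, solids 3). A flag of type $\{2,3\}$ is a pair $(E,S)$ of a plane $E$ and a solid $S$ with $E\subseteq S$; the Kneser graph has these flags as vertices, distinct flags $(E,S),(E',S')$ being adjacent iff $E\cap S'=\emptyset$ and $E'\cap S=\emptyset$. The chromatic number is the least number of independent sets whose union is the whole vertex set. *)

(* Defs.v *)
From HB Require Import structures.
From mathcomp Require Import all_boot all_order all_algebra all_field.
Set Implicit Arguments. Unset Strict Implicit. Unset Printing Implicit Defensive.
Import GRing.Theory.
Local Open Scope ring_scope.

(* The projective space PG(n-1, F) is modelled by the vector space F^n = 'rV[F]_n;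
   a projective subspace of projective dimension d is a vector subspace of
   (vector) dimension d+1. *)
Section Kneser.
Variables (F : fieldType) (n : nat).
Local Notation V := 'rV[F]_n.

Definition is_plane (E : {vspace V}) : Prop := \dim E = 3%N.
Definition is_solid (S : {vspace V}) : Prop := \dim S = 4%N.

Definition is_flag23 (f : {vspace V} * {vspace V}) : Prop :=
  is_plane f.1 /\ is_solid f.2 /\ (f.1 <= f.2)%VS.

Definition kneser_adj (f g : {vspace V} * {vspace V}) : Prop :=
  f <> g /\ (f.1 :&: g.2 = 0)%VS /\ (g.1 :&: f.2 = 0)%VS.

Definition kneser_independent (A : {vspace V} * {vspace V} -> Prop) : Prop :=
  (forall f, A f -> is_flag23 f) /\
  (forall f g, A f -> A g -> ~ kneser_adj f g).

Definition kneser_chi_le (k : nat) : Prop :=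
  exists P : 'I_k -> ({vspace V} * {vspace V} -> Prop),
    (forall i, kneser_independent (P i)) /\
    (forall f, is_flag23 f -> exists i, P i f).
End Kneser.

(* Main.v *)
Require Import Defs.
From HB Require Import structures.
From mathcomp Require Import all_boot all_order all_algebra all_field.
From mathcomp Require Import ring zify.
Set Implicit Arguments. Unset Strict Implicit. Unset Printing Implicit Defensive.
Import GRing.Theory.
Local Open Scope ring_scope.
Section S.
Variable F : finFieldType.
Local Notation V := 'rV[F]_7.
Lemma dimf : \dim (fullv : {vspace V}) = 7%N.
Proof. by rewrite dimvf /= ?mul1n. Qed.
Definition vec7 (a0 a1 a2 a3 a4 a5 a6 : F) : V :=
  \row_(i < 7) nth 0 [:: a0; a1; a2; a3; a4; a5; a6] i.
Definition i0 : 'I_7 := @Ordinal 7 0 isT.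
Definition i1 : 'I_7 := @Ordinal 7 1 isT.
Definition i2 : 'I_7 := @Ordinal 7 2 isT.
Definition i3 : 'I_7 := @Ordinal 7 3 isT.
Definition i4 : 'I_7 := @Ordinal 7 4 isT.
Definition i5 : 'I_7 := @Ordinal 7 5 isT.
Definition i6 : 'I_7 := @Ordinal 7 6 isT.
Lemma vec7E (y : V) : y = vec7 (y 0 i0) (y 0 i1) (y 0 i2) (y 0 i3) (y 0 i4) (y 0 i5) (y 0 i6).
Proof.
apply/rowP => -[[|[|[|[|[|[|[|k]]]]]]] Hk] //; rewrite mxE /=; congr (y 0 _); exact: val_inj.
Qed.
Lemma vec7D a0 a1 a2 a3 a4 a5 a6 b0 b1 b2 b3 b4 b5 b6 :
  vec7 a0 a1 a2 a3 a4 a5 a6 + vec7 b0 b1 b2 b3 b4 b5 b6 =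
  vec7 (a0+b0) (a1+b1) (a2+b2) (a3+b3) (a4+b4) (a5+b5) (a6+b6).
Proof. by apply/rowP => -[[|[|[|[|[|[|[|k]]]]]]] Hk] //; rewrite !mxE. Qed.
Lemma vec7Z c a0 a1 a2 a3 a4 a5 a6 :
  c *: vec7 a0 a1 a2 a3 a4 a5 a6 =
  vec7 (c*a0) (c*a1) (c*a2) (c*a3) (c*a4) (c*a5) (c*a6).
Proof. by apply/rowP => -[[|[|[|[|[|[|[|k]]]]]]] Hk] //; rewrite !mxE. Qed.
Lemma vec7_inj a0 a1 a2 a3 a4 a5 a6 b0 b1 b2 b3 b4 b5 b6 :
  vec7 a0 a1 a2 a3 a4 a5 a6 = vec7 b0 b1 b2 b3 b4 b5 b6 ->
  [/\ a0 = b0, a1 = b1, a2 = b2, a3 = b3 & [/\ a4 = b4, a5 = b5 & a6 = b6]].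
Proof.
move=> /rowP H.
by move: (H i0) (H i1) (H i2) (H i3) (H i4) (H i5) (H i6); rewrite !mxE /=.
Qed.
Definition B : 'M[F]_(7,2) := col_mx (0 : 'M[F]_(5,2)) 1%:M.
Definition W : {vspace V} := lker (linfun (@mulmxr F 1 7 2 B)).
Lemma mulB (y : V) : (y *m B) = rsubmx (y : 'rV_(5+2)).
Proof.
have := @mul_row_col F 1 5 2 2 (lsubmx (y:'rV_(5+2))) (rsubmx (y:'rV_(5+2))) 0 1%:M.
by rewrite hsubmxK mulmx0 add0r mulmx1.
Qed.
Lemma memW y : y \in W -> y 0 i5 = 0 /\ y 0 i6 = 0.
Proof.
rewrite memv_ker lfunE /= mulB => /eqP H2.
split.
  by have := congr1 (fun M : 'rV_2 => M 0 0) H2; rewrite !mxE => <-; congr (y 0 _); exact: val_inj.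
by have := congr1 (fun M : 'rV_2 => M 0 1) H2; rewrite !mxE => <-; congr (y 0 _); exact: val_inj.
Qed.
Lemma dimW : (5 <= \dim W)%N.
Proof.
have := limg_ker_dim (linfun (@mulmxr F 1 7 2 B)) fullv.
rewrite dimf capfv -/W => E.
have : (\dim (limg (linfun (@mulmxr F 1 7 2 B))) <= 2)%N.
  by apply: leq_trans (dimvS (subvf _)) _; rewrite dimvf /= ?mul1n.
move: E; set a := \dim W; set b := \dim (limg _); clearbody a b; lia.
Qed.
Lemma cap_nz (A C : {vspace V}) x : x \in A -> x \in C -> x != 0 -> (A :&: C != 0)%VS.
Proof.
move=> xA xC; apply: contra => /eqP H.
have : x \in (A :&: C)%VS by rewrite memv_cap xA xC.
by rewrite H memv0.
Qed.
Lemma meet_nz (A D C : {vspace V}) : (A <= C)%VS -> (D <= C)%VS ->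
  (\dim C < \dim A + \dim D)%N -> (A :&: D != 0)%VS.
Proof.
move=> AC DC; rewrite -dimv_sum_cap => H; rewrite -dimv_eq0.
have : (\dim (A + D) <= \dim C)%N by apply: dimvS; rewrite subv_add AC DC.
by move: H; lia.
Qed.
Lemma line2 (v d : V) : v != 0 -> d \notin <[v]>%VS -> \dim (<[v]> + <[d]>) = 2%N.
Proof.
move=> v0 dv.
have d0 : d != 0 by apply: contraNneq dv => ->; rewrite mem0v.
have := dimv_sum_cap <[v]> <[d]>; rewrite !dim_vline v0 d0.
suff -> : \dim (<[v]> :&: <[d]>) = 0%N by rewrite addn0.
have := dimvS (capvSr <[v]> <[d]>); rewrite dim_vline d0.
case: (\dim (<[v]> :&: <[d]>)%VS =P 0%N) => // H1 H2.
have Heq : (<[v]> :&: <[d]> == <[d]>)%VS.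
  by rewrite eqEdim capvSr dim_vline d0; move: H1; lia.
move/eqP: Heq => Heq; move: dv; rewrite memvE -Heq capvSl //.
Qed.
Definition cls (v d : V) (f : {vspace V} * {vspace V}) : Prop :=
  is_flag23 f /\ (v \in f.1 \/ (v \in f.2 /\ d \in f.2)).
Lemma cls_indep (v d : V) : v != 0 -> d \notin <[v]>%VS -> kneser_independent (cls v d).
Proof.
move=> v0 dv; split; first by move=> f [].
move=> [E S] [E' S'] [[/= dE [dS ES]] Hf] [[/= dE' [dS' ES']] Hg] [_ [/= H1 H2]].
have vS : v \in S by case: Hf => [H|[]//]; apply: (subvP ES).
have vS' : v \in S' by case: Hg => [H|[]//]; apply: (subvP ES').
case: Hf => [vE|[_ dS1]]; first by have := cap_nz vE vS' v0; rewrite H1 eqxx.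
case: Hg => [vE'|[_ dS1']]; first by have := cap_nz vE' vS v0; rewrite H2 eqxx.
have MS : (<[v]> + <[d]> <= S)%VS by rewrite subv_add -!memvE vS dS1.
have MS' : (<[v]> + <[d]> <= S')%VS by rewrite subv_add -!memvE vS' dS1'.
have := meet_nz ES MS; rewrite dE dS line2 // => /(_ isT).
have sub : (E :&: (<[v]> + <[d]>) <= E :&: S')%VS.
  by apply/subvP => x; rewrite !memv_cap => /andP[-> /(subvP MS')].
by rewrite H1 subv0 in sub; rewrite sub.
Qed.
Definition Wt := ((F * F) + (F + unit))%type.
Definition Col := option (F * (F * Wt)).
Definition wv (w : Wt) : V :=
  match w with
  | inl (a, b) => vec7 0 0 1 a b 0 0
  | inr (inl a) => vec7 0 0 0 1 a 0 0
  | inr (inr _) => vec7 0 0 0 0 1 0 0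
  end.
Definition e0 : V := vec7 1 0 0 0 0 0 0.
Definition e1 : V := vec7 0 1 0 0 0 0 0.
Definition mm : {vspace V} := (<[e0]> + <[e1]>)%VS.
Definition cv (c : Col) : V * V :=
  match c with
  | None => (e0, e1)
  | Some (s, (t, w)) => (vec7 s t 0 0 0 0 0 + wv w, vec7 t 1 0 0 0 0 0)
  end.
Lemma vec70 : (0 : V) = vec7 0 0 0 0 0 0 0.
Proof. by apply/rowP => -[[|[|[|[|[|[|[|k]]]]]]] Hk] //; rewrite !mxE. Qed.
Ltac simp H := rewrite ?(addr0, add0r, mulr0, mulr1, mul0r, mul1r) in H.
Lemma cv_ok c : (cv c).1 != 0 /\ (cv c).2 \notin <[(cv c).1]>%VS.
Proof.
have o := oner_neq0 F.
case: c => [[s [t w]]|] /=.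
  case: w => [[a b]|[a|[]]] /=; rewrite vec7D; split.
  - by apply/eqP; rewrite vec70 => /vec7_inj [_ _ h _ _]; simp h; rewrite h eqxx in o.
  - apply/vlineP => -[k]; rewrite vec7Z => /vec7_inj [_ h1 h2 _ _]; simp h1; simp h2.
    by rewrite -h2 mul0r in h1; rewrite h1 eqxx in o.
  - by apply/eqP; rewrite vec70 => /vec7_inj [_ _ _ h _]; simp h; rewrite h eqxx in o.
  - apply/vlineP => -[k]; rewrite vec7Z => /vec7_inj [_ h1 _ h2 _]; simp h1; simp h2.
    by rewrite -h2 mul0r in h1; rewrite h1 eqxx in o.
  - by apply/eqP; rewrite vec70 => /vec7_inj [_ _ _ _ [h _ _]]; simp h; rewrite h eqxx in o.
  - apply/vlineP => -[k]; rewrite vec7Z => /vec7_inj [_ h1 _ _ [h2 _ _]]; simp h1; simp h2.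
    by rewrite -h2 mul0r in h1; rewrite h1 eqxx in o.
split.
  by apply/eqP; rewrite vec70 => /vec7_inj [h _ _ _ _]; rewrite h eqxx in o.
apply/vlineP => -[k]; rewrite /e0 /e1 vec7Z => /vec7_inj [_ h1 _ _ _]; simp h1.
by rewrite h1 eqxx in o.
Qed.
Lemma normz (y : V) : y \in W -> y \notin mm ->
  exists mu w, mu *: y = vec7 (mu * y 0 i0) (mu * y 0 i1) 0 0 0 0 0 + wv w.
Proof.
move=> /memW [h5 h6]; move: (vec7E y); rewrite h5 h6.
move: (y 0 i0) (y 0 i1) (y 0 i2) (y 0 i3) (y 0 i4) => y0 y1 y2 y3 y4 ->.
move=> ym.
have [y2z|y2n] := eqVneq y2 0.
  have [y3z|y3n] := eqVneq y3 0.
    have [y4z|y4n] := eqVneq y4 0.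
      case/negP: ym; rewrite y2z y3z y4z.
      have -> : vec7 y0 y1 0 0 0 0 0 = y0 *: e0 + y1 *: e1.
        by rewrite /e0 /e1 !vec7Z vec7D; congr vec7; ring.
      by apply: memv_add; apply: memvZ; apply: memv_line.
    exists y4^-1, (inr (inr tt)); rewrite vec7Z vec7D /= y2z y3z; congr vec7; try ring.
    by rewrite add0r mulVf.
  exists y3^-1, (inr (inl (y3^-1 * y4))); rewrite vec7Z vec7D /= y2z; congr vec7; try ring.
  by rewrite add0r mulVf.
exists y2^-1, (inl (y2^-1 * y3, y2^-1 * y4)); rewrite vec7Z vec7D /=; congr vec7; try ring.
by rewrite add0r mulVf.
Qed.
Lemma dim_le7 (U : {vspace V}) : (\dim U <= 7)%N.
Proof. by have := dimvS (subvf U); rewrite dimf. Qed.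
Lemma dim_mm : (\dim mm <= 2)%N.
Proof.
rewrite /mm; apply: leq_trans (leq_addr (\dim (<[e0]> :&: <[e1]>)) _) _.
by rewrite dimv_sum_cap !dim_vline; case: (e0 != 0); case: (e1 != 0).
Qed.
Lemma cover f : is_flag23 f -> exists c, cls (cv c).1 (cv c).2 f.
Proof.
case: f => E S Hfl; have Hfl' := Hfl; case: Hfl => [/= dE [dS ES]].
case: (boolP (mm <= S)%VS) => mS.
  exists None; split => //=; right; split; rewrite memvE; apply: subv_trans mS.
    exact: addvSl.
  exact: addvSr.
have /subvPn [y yS ym] : ~~ (S :&: W <= mm)%VS.
  apply: contra mS => Hsub.
  have d2 : (2 <= \dim (S :&: W))%N.
    have := dimv_sum_cap S W; have := dim_le7 (S + W); have := dimW; rewrite dS.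
    move: (\dim (S + W)) (\dim (S :&: W)) (\dim W) => a b c; lia.
  have : (S :&: W == mm)%VS.
    by rewrite eqEdim Hsub; have := dim_mm; move: (\dim mm) (\dim (S :&: W)) d2 => a b; lia.
  by move/eqP <-; exact: capvSl.
move: yS; rewrite memv_cap => /andP [yS yW].
have EW : (E :&: W != 0)%VS.
  have := meet_nz (subvf E) (subvf W); rewrite dimf dE; apply.
  by have := dimW; move: (\dim W) => a; lia.
have u0 : vpick (E :&: W) != 0 by rewrite vpick0.
have := memv_pick (E :&: W); rewrite memv_cap; move: u0.
move: (vpick (E :&: W)) => u u0 /andP [uE uW].
case: (boolP (u \in mm)) => um; last first.
  have [mu [w Hu]] := normz uW um.
  exists (Some (mu * u 0 i0, (mu * u 0 i1, w))); split => //=; left.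
  by rewrite -Hu; apply: memvZ.
case/memv_addP: um => x /vlineP [al ->] [z /vlineP [be ->]] Hu.
have [bz|bn] := eqVneq be 0.
  move: Hu; rewrite bz scale0r addr0 => Hu.
  have al0 : al != 0 by apply: contraNneq u0 => a0; rewrite Hu a0 scale0r.
  exists None; split => //=; left.
  have -> : e0 = al^-1 *: u by rewrite Hu scalerA mulVf // scale1r.
  exact: memvZ.
set a := be^-1 * al.
have u'E : vec7 a 1 0 0 0 0 0 = be^-1 *: u.
  by rewrite Hu /e0 /e1 !vec7Z !vec7D vec7Z; congr vec7; rewrite ?(mulr0, mulr1, addr0, add0r) ?mulVf.
have u'S : vec7 a 1 0 0 0 0 0 \in S by rewrite u'E; apply: memvZ; apply: (subvP ES).
have [mu [w Hy]] := normz yW ym.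
exists (Some (mu * y 0 i0 + (a - mu * y 0 i1) * a, (a, w))); split => //=; right; split => //.
have -> : vec7 (mu * y 0 i0 + (a - mu * y 0 i1) * a) a 0 0 0 0 0 + wv w =
          mu *: y + (a - mu * y 0 i1) *: vec7 a 1 0 0 0 0 0.
  rewrite Hy vec7Z -addrA [wv w + _]addrC addrA vec7D; congr (vec7 _ _ _ _ _ _ _ + _); ring.
by apply: memvD; apply: memvZ.
Qed.
End S.

Theorem proposition7p2 (F : finFieldType) :
  kneser_chi_le F 7
    (#|F| ^ 4 + #|F| ^ 3 + #|F| ^ 2 + 1)%N.
Proof.
have cardC : #|{: Col F}| = (#|F| ^ 4 + #|F| ^ 3 + #|F| ^ 2 + 1)%N.
  rewrite card_option !card_prod !card_sum card_prod card_unit.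
  move: #|F| => q; rewrite !expnS expn0; ring.
pose P (i : 'I_(#|F| ^ 4 + #|F| ^ 3 + #|F| ^ 2 + 1)) f :=
  exists c : Col F, (enum_rank c : nat) = i /\ cls (cv c).1 (cv c).2 f.
exists P; split.
  move=> i; split; first by move=> f [c [_ [Hf _]]].
  move=> f g [c [Hc Cf]] [c' [Hc' Cg]].
  have ec : c = c' by apply: enum_rank_inj; apply: val_inj; rewrite /= Hc Hc'.
  subst c'; have [h1 h2] := cv_ok c.
  exact: (cls_indep h1 h2).2 f g Cf Cg.
move=> f Hf; have [c Hc] := cover Hf.
have lt : (enum_rank c < #|F| ^ 4 + #|F| ^ 3 + #|F| ^ 2 + 1)%N.
  by rewrite -cardC; exact: ltn_ord.
by exists (Ordinal lt), c.
Qed.
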